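(* Let $\mathcal{F}$, $B_1,\dots,B_m$ be as in the context. Let $\mathcal{G}\subseteq\mathcal{F}$ and let $\phi:\mathcal{G}\to 2^{[n]}$ satisfy $\phi(G)\subseteq G$ for all $G\in\mathcal{G}$. Suppose $\mathcal{G}=\mathcal{G}_1\sqcup\mathcal{G}_2$ where every $F_k\in\mathcal{G}_1$ satisfies $|B_k|=d$ and $\phi(F_k)=B_k$. If the restriction $\phi|_{\mathcal{G}_2}$ is injective, then $\phi$ is injective.
   Context: Let $\mathcal{F}=\{F_1,\dots,F_m\}\subseteq\binom{[n]}{d+1}$ consist of distinct sets and have VC-dimension at most $d$ (no $(d+1)$-set $S$ is shattered, i.e. no $S$ such that every $A\subseteq S$ equals $F\cap S$ for some $F\in\mathcal{F}$). For $i\in[m]$, call $B\subsetneq F_i$ admissible for $F_i$ if $F\cap F_i\neq B$ for every $F\in\mathcal{F}$ (admissible sets exist by the VC-dimension assumption). For each $i$, $B_i$ is a fixed admissible set for $F_i$ of maximum cardinality among all admissible sets for $F_i$. *)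

(* Defs.v *)
From mathcomp Require Import all_boot.
Set Implicit Arguments. Unset Strict Implicit. Unset Printing Implicit Defensive.

(* Ground set [n] is modelled by 'I_n; a family F = {F_1,...,F_m} is an
   indexed family Fs : 'I_m -> {set 'I_n}. *)

Definition shattered (n m : nat) (Fs : 'I_m -> {set 'I_n}) (S : {set 'I_n}) :=
  forall A : {set 'I_n}, A \subset S -> exists i : 'I_m, Fs i :&: S = A.

Definition VCdim_le (n m : nat) (Fs : 'I_m -> {set 'I_n}) (d : nat) :=
  forall S : {set 'I_n}, #|S| = d.+1 -> ~ shattered Fs S.

Definition admissible (n m : nat) (Fs : 'I_m -> {set 'I_n}) (i : 'I_m)
  (B : {set 'I_n}) :=
  B \proper Fs i /\ forall j : 'I_m, Fs j :&: Fs i <> B.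

(* Main.v *)
Require Import Defs.
From mathcomp Require Import all_boot.

Theorem claim3p1 (n d m : nat) (Fs : 'I_m -> {set 'I_n})
  (Fs_inj : injective Fs)
  (Fs_card : forall i, #|Fs i| = d.+1)
  (Fs_VC : VCdim_le Fs d)
  (B : 'I_m -> {set 'I_n})
  (B_adm : forall i, admissible Fs i (B i))
  (B_max : forall i (C : {set 'I_n}), admissible Fs i C -> #|C| <= #|B i|)
  (G G1 G2 : {set 'I_m}) (phi : 'I_m -> {set 'I_n})
  (phi_sub : forall k, k \in G -> phi k \subset Fs k)
  (G_split : G = G1 :|: G2) (G_disj : [disjoint G1 & G2])
  (G1_prop : forall k, k \in G1 -> #|B k| = d /\ phi k = B k)
  (phi_inj2 : {in G2 &, injective phi}) :
  {in G &, injective phi}.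
Proof.
have key : forall k l, k \in G1 -> B k \subset Fs l -> k = l.
  move=> k l kG1 sub.
  have [Bc _] := G1_prop k kG1.
  have [Bp Bne] := B_adm k.
  set J := Fs l :&: Fs k.
  have BI : B k \subset J by rewrite subsetI sub (proper_sub Bp).
  have BIp : B k \proper J.
    by rewrite properEneq BI andbT; apply/eqP => E; apply: (Bne l); rewrite E.
  have cI : d.+1 <= #|J| by rewrite -Bc; apply: proper_card.
  have IF : J \subset Fs k by exact: subsetIr.
  have IFe : J = Fs k by apply/eqP; rewrite eqEcard IF Fs_card.
  have FkFl : Fs k \subset Fs l by rewrite -IFe subsetIl.
  by apply: Fs_inj; apply/eqP; rewrite eqEcard FkFl /= (Fs_card l) (Fs_card k) leqnn.
move=> k l kG lG E.
case: (boolP (k \in G1)) => kG1.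
  apply: (key k l kG1); rewrite -(proj2 (G1_prop k kG1)) E.
  exact: phi_sub.
case: (boolP (l \in G1)) => lG1.
  symmetry; apply: (key l k lG1); rewrite -(proj2 (G1_prop l lG1)) -E.
  exact: phi_sub.
have kG2 : k \in G2 by move: kG; rewrite G_split inE (negbTE kG1).
have lG2 : l \in G2 by move: lG; rewrite G_split inE (negbTE lG1).
exact: phi_inj2.
Qed.
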